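(* Let $b$ be a slowly varying function satisfying $\lim_{t\to0^+}b(t)\in(0,\infty)$. Then there is a function $c:(0,\infty)\to(0,\infty)$ satisfying $c\approx b$ on $(0,\infty)$ that has continuous classical derivatives of all orders (i.e. $c\in\mathcal{C}^\infty((0,\infty))$) and that also satisfies $\lim_{t\to0^+}c(t)\in(0,\infty)$. Furthermore, if $b$ is constant on some right neighbourhood of zero, then $c$ can be chosen in such a way that additionally $\lim_{t\to0^+}c^{(n)}(t)=0$ for all integers $n\ge1$.
   Context: A measurable function $b:(0,\infty)\to(0,\infty)$ is called slowly varying if for every $\varepsilon>0$ there exist a non-decreasing function $b_\varepsilon$ and a non-increasing function $b_{-\varepsilon}$ on $(0,\infty)$ such that $t^{\varepsilon}b(t)\approx b_\varepsilon(t)$ and $t^{-\varepsilon}b(t)\approx b_{-\varepsilon}(t)$ on $(0,\infty)$, where $f\approx g$ means $C^{-1}g\le f\le Cg$ for some constant $C\ge1$ independent of the argument. Measurability is with respect to Lebesgue measure. The limit $\lim_{t\to0^+}c(t)$ need not equal $\lim_{t\to0^+}b(t)$. *)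

(* Defs.v *)
From mathcomp Require Import all_boot all_order all_algebra.
From mathcomp Require Import all_classical all_reals all_analysis.
Set Implicit Arguments. Unset Strict Implicit. Unset Printing Implicit Defensive.
Import Order.TTheory GRing.Theory Num.Theory.
Import numFieldNormedType.Exports.
Local Open Scope classical_set_scope.
Local Open Scope ring_scope.

Definition pos_halfline (R : realType) : set R := [set t | 0 < t].

(* Lebesgue measurable subsets of R: the Caratheodory-measurable sets for
   Lebesgue outer measure (= the completed Lebesgue sigma-algebra). *)
Definition Lmeasurable (R : realType) (A : set R) : Prop :=
  ((wlength (R:=R) idfun)^*)%mu.-cara.-measurable A.

Definition Lmeasurable_fun (R : realType) (D : set R) (f : R -> R) : Prop :=
  forall B : set R, measurable B -> Lmeasurable (D `&` f @^-1` B).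

Definition approx_on (R : realType) (A : set R) (f g : R -> R) : Prop :=
  exists C : R, 1 <= C /\
    forall t, A t -> C^-1 * g t <= f t /\ f t <= C * g t.

Definition nondecreasing_on (R : realType) (A : set R) (f : R -> R) : Prop :=
  forall s t, A s -> A t -> s <= t -> f s <= f t.

Definition nonincreasing_on (R : realType) (A : set R) (f : R -> R) : Prop :=
  forall s t, A s -> A t -> s <= t -> f t <= f s.

(* b : (0,oo) -> (0,oo) slowly varying (values of b outside (0,oo) are
   irrelevant). *)
Definition slowly_varying (R : realType) (b : R -> R) : Prop :=
  (forall t, 0 < t -> 0 < b t) /\
  Lmeasurable_fun (@pos_halfline R) b /\
  forall eps : R, 0 < eps ->
    (exists bp : R -> R, nondecreasing_on (@pos_halfline R) bp /\
       approx_on (@pos_halfline R) (fun t => t `^ eps * b t) bp) /\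
    (exists bm : R -> R, nonincreasing_on (@pos_halfline R) bm /\
       approx_on (@pos_halfline R) (fun t => t `^ (- eps) * b t) bm).

(* f is C^infty on the open set A: every iterated derivative exists
   (hence is continuous) at every point of A. *)
Definition smooth_on (R : realType) (A : set R) (f : R -> R) : Prop :=
  forall (n : nat) (x : R), A x -> derivable (derive1n n f) x 1.

(* Main.v *)
Require Import Defs.
From mathcomp Require Import all_boot all_order all_algebra.
From mathcomp Require Import all_classical all_reals all_analysis.
From mathcomp Require Import ring lra.
Import Order.TTheory GRing.Theory Num.Theory.
Import numFieldNormedType.Exports.
Local Open Scope classical_set_scope.
Local Open Scope ring_scope.
Section S.
Variable R : realType.

Definition ef (k : nat) (x : R) : R :=
  if 0 < x then (x^-1) ^+ k * expR (- x^-1) else 0.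

Lemma ef_ge0 k x : 0 <= ef k x.
Proof.
rewrite /ef; case: ifP => // x0.
by rewrite mulr_ge0 ?expR_ge0 // exprn_ge0 // invr_ge0 ltW.
Qed.

Lemma ef_gt0 k x : 0 < x -> 0 < ef k x.
Proof.
move=> x0; by rewrite /ef x0 mulr_gt0 ?expR_gt0 // exprn_gt0 // invr_gt0.
Qed.

Lemma ef_le0 k x : x <= 0 -> ef k x = 0.
Proof. by move=> x0; rewrite /ef ltNge x0. Qed.

Lemma expR_lb (y : R) (m : nat) : 0 <= y -> (0 < m)%N ->
  (y / m%:R) ^+ m <= expR y.
Proof.
move=> y0 m0.
have -> : expR y = expR (y / m%:R) ^+ m.
  by rewrite -expRM_natl mulrCA divff ?mulr1 // pnatr_eq0 -lt0n.
apply: lerXn2r.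
- by rewrite nnegrE divr_ge0.
- by rewrite nnegrE expR_ge0.
- apply: le_trans (expR_ge1Dx _); rewrite lerDr; exact: ler01.
Qed.

Lemma ef_bound k (h : R) : 0 < h ->
  h^-1 * ef k h <= (k.+2%:R) ^+ k.+2 * h.
Proof.
move=> h0; rewrite /ef h0.
rewrite -[X in _ <= _ * X](invrK h).
have : 0 < h^-1 by rewrite invr_gt0.
move: (h^-1) => y y0.
have E := @expR_lb y k.+2 (ltW y0) isT.
rewrite expRN mulrA -exprS.
rewrite ler_pdivrMr ?expR_gt0 //.
apply: le_trans (_ : k.+2%:R ^+ k.+2 * y^-1 * ((y / k.+2%:R) ^+ k.+2) <= _); last first.
  by rewrite ler_wpM2l // mulr_ge0 // ?exprn_ge0 ?ltW // invr_gt0.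
rewrite exprMn exprVn exprS.
set Y := y ^+ k.+1; set A := (k.+2)%:R ^+ k.+2.
have A0 : A != 0 by rewrite /A expf_neq0 // pnatr_eq0.
have yn0 : y != 0 by rewrite gt_eqF.
suff -> : A / y * (y ^+ k.+2 / A) = y * y ^+ k by []. rewrite !exprS; field; by rewrite A0 yn0.
Qed.

Lemma ef_derive0 k : is_derive (0:R) 1 (ef k) 0.
Proof.
set M := (k.+2%:R : R) ^+ k.+2.
have M0 : 0 < M by rewrite /M exprn_gt0 // ltr0n.
have L : (fun h : R => h^-1 *: ((ef k \o shift 0) (h *: 1) - ef k 0)) @ 0^' --> (0:R).
  apply/cvgr0Pnorm_lt => e e0.
  near=> h.
  rewrite /= addr0 scaler1 (@ef_le0 k 0 (lexx 0)) subr0.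
  have [h0|h0] := leP h 0.
    by rewrite ef_le0 // scaler0 normr0.
  rewrite -[_ *: _]/(h^-1 * ef k h).
  rewrite ger0_norm ?mulr_ge0 ?ef_ge0 ?invr_ge0 ?ltW //.
  apply: le_lt_trans (@ef_bound k h h0) _.
  rewrite -/M -ltr_pdivlMl //.
  have : `|h| < M^-1 * e by near: h; apply: dnbhs0_lt; rewrite mulr_gt0 // invr_gt0.
  by rewrite gtr0_norm.
have D : derivable (ef k) 0 1 by apply/cvg_ex; exists 0.
apply: DeriveDef => //.
exact: cvg_lim L.
Unshelve. all: by end_near.
Qed.

Lemma ef_derive k (x : R) :
  is_derive x 1 (ef k) (- k%:R * ef k.+1 x + ef k.+2 x).
Proof.
have [x0|x0|->] := ltgtP x 0.
- rewrite !ef_le0 ?ltW // mulr0 addr0.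
  apply: (@near_eq_is_derive _ _ _ (cst (0:R))).
  have : x \in `]-oo, 0[ by rewrite in_itv.
  move/near_in_itvNyo; apply: filterS => y; rewrite in_itv /= => y0.
  by rewrite ef_le0 // ltW.
- set g := fun y : R => (y^-1) ^+ k * expR (- y^-1).
  apply: (@near_eq_is_derive _ _ _ g).
    have : x \in `]0, +oo[ by rewrite in_itv /= x0.
    move/near_in_itvoy; apply: filterS => y; rewrite in_itv /= andbT => y0.
    by rewrite /ef y0.
  have xn0 : x != 0 by rewrite gt_eqF.
  have d1 : is_derive x 1 (fun y : R => y^-1) (- x ^- 2).
    apply: is_derive_eq; first exact: (@is_deriveV R id x 1 1 xn0 (is_derive_id _ _)).
    by rewrite /= scaler1.
  have d2 : is_derive x 1 (fun y : R => (y^-1) ^+ k) ((k%:R * (x^-1) ^+ k.-1) *: (- x ^- 2)).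
    rewrite -exprfctE; exact: is_deriveX.
  have d3 : is_derive x 1 (fun y : R => expR (- y^-1)) (expR (- x^-1) * x ^- 2).
    have dn : is_derive x 1 (fun y : R => - y^-1) (x ^- 2).
      by rewrite -[x ^- 2]opprK; exact: (is_deriveN d1).
    exact: (@is_derive1_comp _ expR (fun y : R => - y^-1) x _ _ (is_derive_expR _) dn).
  have := is_deriveM d2 d3.
  rewrite /g /ef x0 => D.
  have -> : (fun y : R => y^-1 ^+ k * expR (- y^-1)) = (fun y => y^-1 ^+ k) * (fun y => expR (- y^-1)) by [].
  apply: is_derive_eq.
  rewrite -exprVn.
  set X := x^-1; set E := expR (- X).
  rewrite /GRing.scale /=.
  clear g; case: k {d2 D} => [|k]; rewrite /=.
    by rewrite !mul0r oppr0 mul0r add0r !expr0 mulr0 addr0 mul1r exprS expr1 mulrC.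
  rewrite !exprS.
  ring.
- rewrite ef_le0 // ef_le0 // mulr0 addr0; exact: ef_derive0.
Qed.

Definition smoothF (F : nat -> R -> R) := forall (n : nat) (x : R), is_derive x 1 (F n) (F n.+1 x).
Definition smooth (f : R -> R) := exists F, F 0%N = f /\ smoothF F.

Section Family.
Variables (I : Type) (phi : I -> R -> R) (d : I -> seq (R * I)).
Hypothesis Hd : forall i (x : R), is_derive x 1 (phi i) (\sum_(q <- d i) q.1 * phi q.2 x).

Let E (L : seq (R * I)) := fun x => \sum_(p <- L) p.1 * phi p.2 x.
Let DL (L : seq (R * I)) := flatten [seq [seq (p.1 * q.1, q.2) | q <- d p.2] | p <- L].

Let E_derive L (x : R) : is_derive x 1 (E L) (E (DL L) x).
Proof.
elim: L x => [|p L IH] x.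
  have -> : E [::] = cst 0 by apply/funext => y; rewrite /E big_nil.
  by apply: is_derive_eq.
have -> : E (p :: L) = (p.1 *: phi p.2) + E L.
  by apply/funext => y; rewrite /E big_cons.
have := IH x; have := Hd p.2 x => H1 H2.
apply: is_derive_eq.
rewrite /E /DL /= big_cat /= big_map scaler_sumr.
congr (_ + _); apply: eq_bigr => q _ /=; by rewrite -mulrA.
Qed.

Lemma family_smooth i : smooth (phi i).
Proof.
exists (fun n => E (iter n DL [:: (1, i)])); split.
  by apply/funext => x; rewrite /E /= big_seq1 mul1r.
move=> n x; exact: E_derive.
Qed.
End Family.

Lemma is_derive_ext (f g : R -> R) (x df : R) :
  (forall y, f y = g y) -> is_derive x 1 f df -> is_derive x 1 g df.
Proof. move=> fg; apply: near_eq_is_derive; near=> y; exact: fg. Unshelve. all: by end_near. Qed.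

Lemma smooth_ext (f g : R -> R) : (forall y, f y = g y) -> smooth f -> smooth g.
Proof. by move=> fg; have -> : f = g by apply/funext. Qed.

Lemma smooth_derive1n (f : R -> R) F : F 0%N = f -> smoothF F ->
  forall n, derive1n n f = F n.
Proof.
move=> F0 HF; elim => [|n IH]; first by rewrite derive1n0.
rewrite derive1nS IH; apply/funext => x.
by rewrite derive1E; have [_ ->] := HF n x.
Qed.

Lemma smooth_ef k : smooth (ef k).
Proof.
apply: (@family_smooth nat ef (fun k => [:: (- k%:R, k.+1); (1, k.+2)])) => i x.
apply: is_derive_eq; first exact: ef_derive.
by rewrite big_cons big_seq1 /= mul1r.
Qed.

Lemma smooth_cst (a : R) : smooth (fun _ => a).
Proof.
exists (fun n => if n is 0%N then (fun _ => a) else (fun _ => 0)); split => //.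
move=> [|n] x /=; exact: is_derive_cst.
Qed.

Lemma smooth_add (f g : R -> R) : smooth f -> smooth g -> smooth (fun x => f x + g x).
Proof.
move=> [F [F0 HF]] [G [G0 HG]].
exists (fun n x => F n x + G n x); split; first by rewrite F0 G0.
move=> n x; have := HF n x; have := HG n x => H1 H2.
apply: (@is_derive_ext (F n + G n)) => //.
Qed.

Lemma smooth_scale (a : R) (f : R -> R) : smooth f -> smooth (fun x => a * f x).
Proof.
move=> [F [F0 HF]].
exists (fun n x => a * F n x); split; first by rewrite F0.
move=> n x; have := HF n x => H1.
apply: (@is_derive_ext (a *: F n)) => //.
Qed.

Lemma smooth_affine (f : R -> R) (a b : R) : smooth f -> smooth (fun x => f (a * x + b)).
Proof.
move=> [F [F0 HF]].
exists (fun n x => a ^+ n * F n (a * x + b)); split; first by rewrite F0 expr0 //; apply/funext => x; rewrite mul1r.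
move=> n x.
have hl : is_derive x 1 (fun y => a * y + b) a.
  have h1 : is_derive x 1 (a *: (@id R)) (a *: 1) by exact: is_deriveZ.
  have h2 : is_derive x 1 (cst b) 0 by exact: is_derive_cst.
  have h3 := is_deriveD h1 h2.
  rewrite scaler1 addr0 in h3.
  exact: h3.
have hc := @is_derive1_comp R (F n) (fun y => a * y + b) x _ _ (HF n (a * x + b)) hl.
have hz := is_deriveZ (a ^+ n) hc.
have e : a ^+ n *: (F n.+1 (a * x + b) * a) = a ^+ n.+1 * F n.+1 (a * x + b).
  by rewrite -[a ^+ n *: _]/(a ^+ n * (F n.+1 (a * x + b) * a)) exprSr; ring.
rewrite e in hz.
exact: hz.
Qed.

Lemma smooth_mul (f g : R -> R) : smooth f -> smooth g -> smooth (fun x => f x * g x).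
Proof.
move=> [F [F0 HF]] [G [G0 HG]].
have Hd : forall (p : nat * nat) (x : R), is_derive x 1 (fun x => F p.1 x * G p.2 x)
   (\sum_(q <- [:: (1, (p.1.+1, p.2)); (1, (p.1, p.2.+1))]) q.1 * (F q.2.1 x * G q.2.2 x)).
  move=> [i j] x /=.
  have H := is_deriveM (HF i x) (HG j x).
  apply: (@is_derive_ext (F i * G j)) => //.
  apply: is_derive_eq.
  rewrite big_cons big_seq1 /= /GRing.scale /= !mul1r.
  by rewrite addrC mulrC.
have := @family_smooth (nat * nat) (fun p x => F p.1 x * G p.2 x) _ Hd (0%N, 0%N).
by rewrite /= F0 G0.
Qed.

Fixpoint dprod (L : seq nat) : seq (seq nat) :=
  if L is a :: L' then (a.+1 :: L') :: map (cons a) (dprod L') else [::].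

Lemma prod_derive (G : nat -> R -> R) : smoothF G -> forall L (x : R),
  is_derive x 1 (fun x => \prod_(i <- L) G i x)
    (\sum_(L' <- dprod L) \prod_(i <- L') G i x).
Proof.
move=> HG; elim => [|a L IH] x.
  apply: (@is_derive_ext (cst 1)); first by move=> y; rewrite big_nil.
  by apply: is_derive_eq; rewrite /= big_nil.
apply: (@is_derive_ext (G a * (fun x => \prod_(i <- L) G i x))).
  by move=> y; rewrite big_cons.
have H := is_deriveM (HG a x) (IH x).
apply: is_derive_eq.
rewrite /= big_cons big_cons big_map /GRing.scale /= mulr_sumr addrC mulrC.
congr (_ + _); apply: eq_bigr => L' _; by rewrite big_cons.
Qed.

Lemma smooth_inv (g : R -> R) : smooth g -> (forall x, g x != 0) ->
  smooth (fun x => (g x)^-1).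
Proof.
move=> [G [G0 HG]] gn0; subst g.
pose phi := fun (p : nat * seq nat) x => (G 0%N x)^-1 ^+ p.1 * \prod_(i <- p.2) G i x.
pose d := fun (p : nat * seq nat) =>
  (- p.1%:R : R, (p.1.+1, 1%N :: p.2)) :: map (fun L' => (1 : R, (p.1, L'))) (dprod p.2).
have Hd : forall p (x : R), is_derive x 1 (phi p) (\sum_(q <- d p) q.1 * phi q.2 x).
  move=> [m L] x /=.
  have H1 := @prod_derive G HG L x.
  have dv : is_derive x 1 (fun y => (G 0%N y)^-1) (- (G 0%N x) ^- 2 *: G 1%N x).
    exact: is_deriveV.
  have H2 := is_deriveX m dv.
  have H := is_deriveM H2 H1.
  apply: (@is_derive_ext ((fun y => (G 0%N y)^-1) ^+ m * (fun x => \prod_(i <- L) G i x))).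
    by move=> y; rewrite /phi exprfctE.
  apply: is_derive_eq.
  rewrite /d /phi big_cons big_map /= big_cons /= /GRing.scale /=.
  under [X in _ = _ + X]eq_bigr do rewrite mul1r.
  rewrite -mulr_sumr.
  set P := \prod_(i <- L) G i x; set S := \sum_(_ <- _) _.
  rewrite -exprVn; set h := (G 0%N x)^-1.
  rewrite exprfctE /= -/h.
  case: m {H2 H} => [|m] /=; rewrite ?expr0 !exprS ?expr0; ring.
have := @family_smooth _ phi d Hd (1%N, [::]).
apply: smooth_ext => y; by rewrite /phi /= big_nil mulr1 expr1.
Qed.

Definition Sf (x : R) : R := ef 0 x / (ef 0 x + ef 0 (1 - x)).

Lemma Sf_den_gt0 x : 0 < ef 0 x + ef 0 (1 - x).
Proof.
have [x0|x0] := ltP 0 x.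
  by apply: lt_le_trans (@ef_gt0 0 x x0) _; rewrite lerDl ef_ge0.
have h : 0 < 1 - x by rewrite subr_gt0; apply: le_lt_trans x0 ltr01.
by apply: lt_le_trans (@ef_gt0 0 (1 - x) h) _; rewrite lerDr ef_ge0.
Qed.

Lemma Sf_smooth : smooth Sf.
Proof.
apply: smooth_mul; first exact: smooth_ef.
apply: smooth_inv; last by move=> x; rewrite gt_eqF // Sf_den_gt0.
apply: smooth_add; first exact: smooth_ef.
apply: (@smooth_ext _ _ _ (@smooth_affine (ef 0) (-1) 1 (smooth_ef 0))).
by move=> y; rewrite mulN1r addrC.
Qed.

Lemma Sf_le0 x : x <= 0 -> Sf x = 0.
Proof. by move=> x0; rewrite /Sf ef_le0 // mul0r. Qed.

Lemma Sf_ge1 x : 1 <= x -> Sf x = 1.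
Proof.
move=> x1; rewrite /Sf (@ef_le0 0 (1 - x)) ?subr_le0 // addr0 divff //.
by rewrite gt_eqF // ef_gt0 // (lt_le_trans ltr01).
Qed.

Lemma Sf_ge0 x : 0 <= Sf x.
Proof. by rewrite /Sf divr_ge0 ?ef_ge0 // ltW // Sf_den_gt0. Qed.

Lemma Sf_le1 x : Sf x <= 1.
Proof. by rewrite /Sf ler_pdivrMr ?Sf_den_gt0 // mul1r lerDl ef_ge0. Qed.

Definition nd (j : int) : R := expR (j%:~R).
Definition uu (j : int) (t : R) : R := (t / nd j - 1) / (expR 1 - 1).
Definition cc (b : R -> R) (t : R) : R :=
  b (nd (Num.floor (ln t))) + (b (nd (Num.floor (ln t) + 1)) - b (nd (Num.floor (ln t))))
     * Sf (uu (Num.floor (ln t)) t).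
Definition LL (b : R -> R) (k : int) (t : R) : R :=
  b (nd (k - 1)) + (b (nd k) - b (nd (k - 1))) * Sf (uu (k - 1) t)
  + (b (nd (k + 1)) - b (nd k)) * Sf (uu k t).

Lemma nd_gt0 j : 0 < nd j.
Proof. exact: expR_gt0. Qed.

Lemma e_gt1 : 1 < expR (1 : R).
Proof. by rewrite expR_gt1. Qed.

Lemma ndS j : nd (j + 1) = nd j * expR 1.
Proof. by rewrite /nd intrD expRD. Qed.

Lemma floor_ln j t : nd j <= t < nd (j + 1) -> Num.floor (ln t) = j.
Proof.
move=> /andP[h1 h2].
have t0 : 0 < t by apply: lt_le_trans (nd_gt0 j) h1.
apply: floor_def; apply/andP; split.
  by rewrite -ler_expR lnK // posrE.
by rewrite -ltr_expR lnK // posrE.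
Qed.

Lemma nd_floor t : 0 < t ->
  nd (Num.floor (ln t)) <= t < nd (Num.floor (ln t) + 1).
Proof.
move=> t0; apply/andP; split.
  by rewrite /nd -[X in _ <= X](@lnK _ t) ?posrE // ler_expR floor_le.
by rewrite /nd -[X in X < _](@lnK _ t) ?posrE // ltr_expR floorD1_gt.
Qed.

Lemma uu_ge1 j t : nd (j + 1) <= t -> 1 <= uu j t.
Proof.
rewrite ndS => h.
have e1 := e_gt1.
rewrite /uu ler_pdivlMr ?subr_gt0 // mul1r lerD2r ler_pdivlMr ?nd_gt0 //.
by rewrite mulrC.
Qed.

Lemma uu_le0 j t : t <= nd j -> uu j t <= 0.
Proof.
move=> h; have e1 := e_gt1.
rewrite /uu pmulr_lle0 ?invr_gt0 ?subr_gt0 // subr_le0 ler_pdivrMr ?nd_gt0 //.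
by rewrite mul1r.
Qed.

Lemma uu_affine j t : uu j t = ((nd j)^-1 / (expR 1 - 1)) * t + (- (expR 1 - 1)^-1).
Proof. rewrite /uu; ring. Qed.

Lemma cc_eq b j t : nd j <= t < nd (j + 1) ->
  cc b t = b (nd j) + (b (nd (j + 1)) - b (nd j)) * Sf (uu j t).
Proof. by move=> h; rewrite /cc (@floor_ln j t h). Qed.

Lemma LL_eq b k t : nd (k - 1) < t < nd (k + 1) -> cc b t = LL b k t.
Proof.
move=> /andP[h1 h2]; rewrite /LL.
have [hk|hk] := leP (nd k) t.
  rewrite (@cc_eq b k t) ?hk ?h2 //.
  rewrite (@Sf_ge1 (uu (k - 1) t)); last by apply: uu_ge1; rewrite subrK.
  rewrite mulr1; ring.
rewrite (@cc_eq b (k - 1) t); last by rewrite (ltW h1) subrK hk.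
rewrite subrK (@Sf_le0 (uu k t)); last by apply: uu_le0; rewrite ltW.
by rewrite mulr0 addr0.
Qed.

Lemma Sf_aff_smooth (a c : R) : smooth (fun t => Sf (a * t + c)).
Proof. exact: (@smooth_affine Sf a c Sf_smooth). Qed.

Lemma LL_smooth b k : smooth (LL b k).
Proof.
apply: (@smooth_ext (fun t => (b (nd (k - 1)) + (b (nd k) - b (nd (k - 1))) *
   Sf (((nd (k - 1))^-1 / (expR 1 - 1)) * t + (- (expR 1 - 1)^-1)))
  + (b (nd (k + 1)) - b (nd k)) * Sf (((nd k)^-1 / (expR 1 - 1)) * t + (- (expR 1 - 1)^-1)))).
  by move=> y; rewrite /LL !uu_affine.
apply: smooth_add; last exact: smooth_scale (Sf_aff_smooth _ _).
apply: smooth_add; first exact: smooth_cst.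
exact: smooth_scale (Sf_aff_smooth _ _).
Qed.

Lemma derive1n_local (f g : R -> R) (a c : R) :
  (forall y, a < y < c -> f y = g y) ->
  forall n y, a < y < c -> derive1n n f y = derive1n n g y.
Proof.
move=> fg; elim => [|n IH] y hy; first by rewrite !derive1n0 fg.
rewrite !derive1nS !derive1E; apply: near_eq_derive.
have : y \in `]a, c[ by rewrite in_itv.
move/near_in_itvoo; apply: filterS => z; rewrite in_itv /= => hz.
exact: IH.
Qed.

Lemma cc_smooth_on b : smooth_on (@pos_halfline R) (cc b).
Proof.
move=> n x; rewrite /pos_halfline /= => x0.
set k := Num.floor (ln x).
have [F [F0 HF]] := LL_smooth b k.
have hx : nd (k - 1) < x < nd (k + 1).
  have /andP[h1 h2] := @nd_floor x x0.
  rewrite h2 andbT; apply: lt_le_trans h1.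
  by rewrite /nd ltr_expR ltr_int gtrDl ltrN10.
have loc : forall y, nd (k - 1) < y < nd (k + 1) -> derive1n n (cc b) y = F n y.
  move=> y hy; rewrite (@derive1n_local _ _ _ _ (@LL_eq b k) n y hy).
  by rewrite (@smooth_derive1n _ F F0 HF).
have : is_derive x 1 (F n) (F n.+1 x) by exact: HF.
move=> D.
have D2 : is_derive x 1 (derive1n n (cc b)) (F n.+1 x).
  apply: (near_eq_is_derive _ D).
  have : x \in `]nd (k - 1), nd (k + 1)[ by rewrite in_itv.
  move/near_in_itvoo; apply: filterS => z; rewrite in_itv /= => hz.
  by rewrite loc.
by case: D2.
Qed.

Lemma sv_compare b : slowly_varying b -> exists K : R, 1 <= K /\
  forall s t, 0 < t -> t <= s -> s <= expR 1 * t -> b s <= K * b t /\ b t <= K * b s.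
Proof.
move=> [bpos [_ H]].
have [[bp [bpinc [C1 [C11 HC1]]]] [bm [bmdec [C2 [C21 HC2]]]]] := H 1 ltr01.
have e1 := e_gt1.
exists (C1 ^+ 2 * C2 ^+ 2 * expR 1); split.
  by rewrite !mulr_ege1 ?exprn_ege1 // ltW.
move=> s t t0 ts se.
have s0 : 0 < s by apply: lt_le_trans ts.
have [A1 A2] := HC1 t t0.
have [B1 B2] := HC1 s s0.
have [A3 A4] := HC2 t t0.
have [B3 B4] := HC2 s s0.
have pt1 : t `^ 1 = t := powRr1 (ltW t0).
have ps1 : s `^ 1 = s := powRr1 (ltW s0).
have pt2 : t `^ (-1) = t^-1 := powR_inv1 (ltW t0).
have ps2 : s `^ (-1) = s^-1 := powR_inv1 (ltW s0).
rewrite pt1 in A1 A2; rewrite ps1 in B1 B2; rewrite pt2 in A3 A4; rewrite ps2 in B3 B4.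
have bt0 := bpos t t0; have bs0 := bpos s s0.
have Hp := bpinc t s t0 s0 ts.
have Hm := bmdec t s t0 s0 ts.
have C10 : 0 < C1 by apply: lt_le_trans ltr01 C11.
have C20 : 0 < C2 by apply: lt_le_trans ltr01 C21.
split.
- (* s^-1 b s <= C2 bm s <= C2 bm t <= C2^2 t^-1 b t *)
  have h1 : s^-1 * b s <= C2 ^+ 2 * (t^-1 * b t).
    apply: le_trans B4 _.
    rewrite expr2 -mulrA ler_pM2l //.
    apply: le_trans Hm _.
    by rewrite -ler_pdivrMl // mulrC.
  have h2 : b s <= C2 ^+ 2 * (s / t) * b t.
    have si : 0 < s^-1 by rewrite invr_gt0.
    rewrite -(ler_pM2l si).
    suff -> : s^-1 * (C2 ^+ 2 * (s / t) * b t) = C2 ^+ 2 * (t^-1 * b t) by [].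
    field; by rewrite !gt_eqF.
  apply: le_trans h2 _.
  rewrite ler_pM2r // (mulrC (C1 ^+ 2)) -(mulrA (C2 ^+ 2)) ler_pM2l ?exprn_gt0 //.
  have hst : s / t <= expR 1 by rewrite ler_pdivrMr // mulrC.
  apply: le_trans hst _.
  rewrite -[X in X <= _]mul1r ler_pM2r ?expR_gt0 //.
  by rewrite exprn_ege1.
- have h1 : t * b t <= C1 ^+ 2 * (s * b s).
    apply: le_trans A2 _.
    rewrite expr2 -mulrA ler_pM2l //.
    apply: le_trans Hp _.
    by rewrite -ler_pdivrMl // mulrC.
  have h2 : b t <= C1 ^+ 2 * (s / t) * b s.
    rewrite -(ler_pM2l t0).
    suff -> : t * (C1 ^+ 2 * (s / t) * b s) = C1 ^+ 2 * (s * b s) by [].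
    field; by rewrite !gt_eqF.
  apply: le_trans h2 _.
  rewrite ler_pM2r // -(mulrA (C1 ^+ 2)) ler_pM2l ?exprn_gt0 //.
  have hst : s / t <= expR 1 by rewrite ler_pdivrMr // mulrC.
  apply: le_trans hst _.
  rewrite -[X in X <= _]mul1r ler_pM2r ?expR_gt0 //.
  by rewrite exprn_ege1.
Qed.

Lemma convex_le (lo x y S : R) : 0 <= S -> S <= 1 -> lo <= x -> lo <= y ->
  lo <= x + (y - x) * S.
Proof.
move=> S0 S1 hx hy.
have h1 : 0 <= (1 - S) * (x - lo) by apply: mulr_ge0; rewrite subr_ge0.
have h2 : 0 <= S * (y - lo) by apply: mulr_ge0; rewrite ?subr_ge0.
nra.
Qed.

Lemma convex_ge (hi x y S : R) : 0 <= S -> S <= 1 -> x <= hi -> y <= hi ->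
  x + (y - x) * S <= hi.
Proof.
move=> S0 S1 hx hy.
have h1 : 0 <= (1 - S) * (hi - x) by apply: mulr_ge0; rewrite subr_ge0.
have h2 : 0 <= S * (hi - y) by apply: mulr_ge0; rewrite ?subr_ge0.
nra.
Qed.

Lemma convex_lt (lo x y S : R) : 0 <= S -> S <= 1 -> lo < x -> lo < y ->
  lo < x + (y - x) * S.
Proof.
move=> S0 S1 hx hy.
have [->|Sn0] := eqVneq S 0; first by rewrite mulr0 addr0.
have Sp : 0 < S by rewrite lt_def Sn0.
have h1 : 0 <= (1 - S) * (x - lo) by apply: mulr_ge0; rewrite subr_ge0 // ltW.
have h2 : 0 < S * (y - lo) by apply: mulr_gt0; rewrite ?subr_gt0.
nra.
Qed.

Lemma convex_gt (hi x y S : R) : 0 <= S -> S <= 1 -> x < hi -> y < hi ->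
  x + (y - x) * S < hi.
Proof.
move=> S0 S1 hx hy.
have [->|Sn0] := eqVneq S 0; first by rewrite mulr0 addr0.
have Sp : 0 < S by rewrite lt_def Sn0.
have h1 : 0 <= (1 - S) * (hi - x) by apply: mulr_ge0; rewrite subr_ge0 // ltW.
have h2 : 0 < S * (hi - y) by apply: mulr_gt0; rewrite ?subr_gt0.
nra.
Qed.

Lemma cc_approx b : slowly_varying b -> approx_on (@pos_halfline R) (cc b) b.
Proof.
move=> sv; have [K [K1 HK]] := @sv_compare b sv.
have K0 : 0 < K by apply: lt_le_trans ltr01 K1.
exists K; split => // t; rewrite /pos_halfline /= => t0.
set j := Num.floor (ln t).
have /andP[h1 h2] := @nd_floor t t0.
rewrite (@cc_eq b j t) ?h1 ?h2 //.
have e1 := e_gt1.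
have n0 := nd_gt0 j.
have [a1 a2] : b t <= K * b (nd j) /\ b (nd j) <= K * b t.
  apply: HK => //; rewrite mulrC -ndS; exact: ltW.
have [a3 a4] : b (nd (j + 1)) <= K * b t /\ b t <= K * b (nd (j + 1)).
  apply: HK => //; first exact: ltW.
  by rewrite ndS mulrC ler_pM2l ?expR_gt0.
have S0 := Sf_ge0 (uu j t); have S1 := Sf_le1 (uu j t).
split.
  apply: convex_le => //; by rewrite ler_pdivrMl.
exact: convex_ge.
Qed.

Lemma cc_pos b : slowly_varying b -> forall t, 0 < t -> 0 < cc b t.
Proof.
move=> sv t t0; have [K [K1 HK]] := @cc_approx b sv.
have [h _] := HK t t0.
apply: lt_le_trans h.
have K0 : 0 < K by apply: lt_le_trans ltr01 K1.
by rewrite mulr_gt0 ?invr_gt0 //; case: sv => bp _; exact: bp.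
Qed.

Lemma near0r_delta (P : R -> Prop) : (\forall t \near (0:R)^'+, P t) ->
  exists2 d : R, 0 < d & forall t, 0 < t -> t < d -> P t.
Proof.
move=> /nbhs_ballP [d d0 H]; exists d => // t t0 td.
apply: H => //; by rewrite /ball /= sub0r normrN gtr0_norm.
Qed.

Lemma cc_lim b (l : R) : b t @[t --> (0:R)^'+] --> l -> cc b t @[t --> (0:R)^'+] --> l.
Proof.
move=> hb; apply/cvgrPdist_lt => e e0.
have [d d0 Hb] := @near0r_delta (fun t => `|l - b t| < e) (@cvgr_dist_lt _ _ _ _ _ b l hb e e0).
have e1 := e_gt1.
have de : 0 < d / expR 1 by rewrite divr_gt0 ?expR_gt0.
near=> t.
have t0 : 0 < t by near: t; exact: nbhs_right_gt.
have td : t < d / expR 1 by near: t; exact: nbhs_right_lt.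
set j := Num.floor (ln t).
have /andP[h1 h2] := @nd_floor t t0.
rewrite (@cc_eq b j t) ?h1 ?h2 //.
have n0 := nd_gt0 j.
have td' : t < d by apply: lt_le_trans td _; rewrite ler_pdivrMr ?expR_gt0 // ler_peMr // ltW.
have k1 := Hb (nd j) n0 (le_lt_trans h1 td').
have k2 : `|l - b (nd (j + 1))| < e.
  apply: Hb; first exact: nd_gt0.
  rewrite ndS; apply: le_lt_trans (_ : t * expR 1 < d).
    by rewrite ler_pM2r ?expR_gt0.
  by rewrite -ltr_pdivlMr ?expR_gt0.
have S0 := Sf_ge0 (uu j t); have S1 := Sf_le1 (uu j t).
move: k1 k2; rewrite !ltr_distlC => /andP[k1 k1'] /andP[k2 k2'].
by rewrite convex_lt ?convex_gt.
Unshelve. all: by end_near.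
Qed.

Lemma derive1n_cst (a : R) n : derive1n n.+1 (fun _ : R => a) = (fun _ => 0).
Proof.
elim: n => [|n IH].
  by rewrite derive1nS derive1n0; apply/funext => x; exact: derive1_cst.
by rewrite derive1nS IH; apply/funext => x; exact: derive1_cst.
Qed.

Lemma cc_flat b (dl k0 : R) : 0 < dl -> (forall t, 0 < t < dl -> b t = k0) ->
  forall n, (1 <= n)%N -> derive1n n (cc b) t @[t --> (0:R)^'+] --> 0.
Proof.
move=> dl0 hb n n1.
have e1 := e_gt1.
have de : 0 < dl / expR 1 by rewrite divr_gt0 ?expR_gt0.
have cst : forall t, 0 < t < dl / expR 1 -> cc b t = k0.
  move=> t /andP[t0 td].
  set j := Num.floor (ln t).
  have /andP[h1 h2] := @nd_floor t t0.
  rewrite (@cc_eq b j t) ?h1 ?h2 //.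
  have td' : t < dl by apply: lt_le_trans td _; rewrite ler_pdivrMr ?expR_gt0 // ler_peMr // ltW.
  have n0 := nd_gt0 j.
  rewrite !hb ?subrr ?mul0r ?addr0 //.
    rewrite nd_gt0 /= ndS; apply: le_lt_trans (_ : t * expR 1 < dl).
      by rewrite ler_pM2r ?expR_gt0.
    by rewrite -ltr_pdivlMr ?expR_gt0.
  by rewrite n0 (le_lt_trans h1 td').
case: n n1 => [//|n] _.
apply: cvg_near_cst.
near=> t.
have t0 : 0 < t by near: t; exact: nbhs_right_gt.
have td : t < dl / expR 1 by near: t; exact: nbhs_right_lt.
rewrite (@derive1n_local _ (fun _ => k0) 0 (dl / expR 1) cst n.+1 t); last by rewrite t0 td.
by rewrite derive1n_cst.
Unshelve. all: by end_near.
Qed.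
End S.

Theorem lemma3p3 (R : realType) (b : R -> R) :
  slowly_varying b ->
  (exists l : R, 0 < l /\ b t @[t --> 0^'+] --> l) ->
  exists c : R -> R,
    (forall t, 0 < t -> 0 < c t) /\
    approx_on (@pos_halfline R) c b /\
    smooth_on (@pos_halfline R) c /\
    (exists l : R, 0 < l /\ c t @[t --> 0^'+] --> l) /\
    ((exists delta : R, 0 < delta /\ exists k : R,
        forall t, 0 < t < delta -> b t = k) ->
     forall n : nat, (1 <= n)%N -> derive1n n c t @[t --> 0^'+] --> 0).
Proof.
move=> sv [l [l0 hl]].
exists (@cc R b); split; first exact: cc_pos.
split; first exact: cc_approx.
split; first exact: cc_smooth_on.
split; first by exists l; split => //; exact: cc_lim.
move=> [dl [dl0 [k0 hk]]]; exact: (@cc_flat R b dl k0 dl0 hk).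
Qed.
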